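(* Let $n$ be a positive integer and let $D(n)=[d_{i,j}]_{i,j=1}^n$ be the matrix with $d_{i,j}=F_i$ if $i\mid j$ and $d_{i,j}=0$ otherwise. Then $D(n)$ is invertible and $D(n)^{-1}=[\tilde d_{i,j}]_{i,j=1}^n$, where \[ \tilde d_{i,j}=\begin{cases}\dfrac{1}{F_j}\,\mu\!\left(\dfrac{j}{i}\right) & \text{if } i\mid j,\\[2mm] 0 & \text{otherwise}.\end{cases} \]
   Context: The Fibonacci numbers are $F_1=F_2=1$, $F_n=F_{n-1}+F_{n-2}$ for $n\ge 3$. $\mu$ denotes the Möbius function: $\mu(1)=1$, $\mu(j)=0$ if $j$ has a repeated prime factor, and $\mu(j)=(-1)^k$ if $j$ is a product of $k$ distinct primes. *)

(* Defs.v *)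
From HB Require Import structures.
From mathcomp Require Import all_boot all_order all_algebra.
Set Implicit Arguments. Unset Strict Implicit. Unset Printing Implicit Defensive.
Import Order.TTheory GRing.Theory Num.Theory.

Fixpoint fib (n : nat) : nat :=
  match n with
  | 0 => 0
  | 1 => 1
  | (m.+1 as k).+1 => fib k + fib m
  end.

Definition mobius (n : nat) : int :=
  if n == 0%N then 0%R
  else if all (fun p => logn p n <= 1) (primes n) then ((-1) ^+ size (primes n))%R
  else 0%R.

Local Open Scope ring_scope.

(* D(n): rows/columns indexed by i : 'I_n standing for i+1 in {1..n}. *)
Definition Dmat (n : nat) : 'M[rat]_n :=
  \matrix_(i < n, j < n) if (i.+1 %| j.+1)%N then (fib i.+1)%:R else 0.

Definition Dinv (n : nat) : 'M[rat]_n :=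
  \matrix_(i < n, j < n)
    if (i.+1 %| j.+1)%N then ((fib j.+1)%:R)^-1 * (mobius (j.+1 %/ i.+1))%:~R else 0.

Lemma fib_check : [seq fib k | k <- iota 1 8] = [:: 1; 1; 2; 3; 5; 8; 13; 21]%N.
Proof. by []. Qed.
Lemma mobius_check : [seq mobius k | k <- iota 1 12] = [:: 1; -1; -1; 0; -1; 1; -1; 0; 0; 1; -1; 0]%R.
Proof. by []. Qed.

(* Main.v *)
Require Import Defs.
From HB Require Import structures.
From mathcomp Require Import all_boot all_order all_algebra zify.
Import Order.TTheory GRing.Theory Num.Theory.
Local Open Scope ring_scope.

Lemma mob_sq p d : prime p -> (p ^ 2 %| d)%N -> mobius d = 0.
Proof.
move=> pp hd; rewrite /mobius; case: eqP => // /eqP d0.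
have d0' : (0 < d)%N by rewrite lt0n.
case: allP => // H.
have : p \in primes d.
  by rewrite mem_primes pp d0' (dvdn_trans _ hd) // dvdn_exp.
move/H; rewrite (pfactor_dvdn _ pp d0') in hd.
by move: hd; case: (logn p d) => [|[|k]].
Qed.

Lemma mob_mulp p d : prime p -> ~~ (p %| d)%N -> (0 < d)%N ->
  mobius (p * d) = - mobius d.
Proof.
move=> pp npd d0.
have p0 : (0 < p)%N by apply: prime_gt0.
have pd0 : (0 < p * d)%N by rewrite muln_gt0 p0.
have pe : perm_eq (primes (p * d)) (p :: primes d).
  apply: uniq_perm; first exact: primes_uniq.
    by rewrite /= primes_uniq andbT mem_primes (negbTE npd) !andbF.
  move=> q; rewrite primesM // primes_prime // inE in_cons. done.

rewrite /mobius (negbTE (lt0n_neq0 pd0)) (negbTE (lt0n_neq0 d0)).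
rewrite (perm_all _ pe) (perm_size pe) /=.
rewrite lognM // logn_prime // eqxx (_ : logn p d = 0%N); last first.
  by apply/eqP; rewrite -leqn0 leqNgt logn_gt0 mem_primes pp d0 (negbTE npd).
rewrite (@eq_in_all _ _ (fun q => logn q d <= 1)%N); last first.
  move=> q; rewrite mem_primes => /and3P [qp _ qd].
  rewrite lognM // logn_prime //.
  case: eqP => // qe; subst q.
  by rewrite qd in npd.
by case: (all _ (primes d)); rewrite ?oppr0 // exprS mulN1r.
Qed.

Lemma big_uniq_eq (s t : seq nat) (F : nat -> int) : uniq s -> uniq t -> s =i t ->
  \sum_(x <- s) F x = \sum_(x <- t) F x.
Proof. by move=> us ut st; apply: perm_big; apply: uniq_perm. Qed.

Lemma sum_mob_p p m : prime p -> (0 < m)%N ->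
  \sum_(d <- divisors (p * m)) mobius d = 0.
Proof.
move=> pp m0.
have p0 : (0 < p)%N by apply: prime_gt0.
have pm0 : (0 < p * m)%N by rewrite muln_gt0 p0.
rewrite (bigID (fun d => p %| d)%N) /=.
have -> : \sum_(d <- divisors (p * m) | (p %| d)%N) mobius d
        = \sum_(e <- divisors m) mobius (p * e).
  rewrite -big_filter -(big_map (muln p) xpredT).
  apply: big_uniq_eq.
  - by apply: filter_uniq; apply: divisors_uniq.
  - rewrite map_inj_uniq ?divisors_uniq //; by move=> x y /eqP; rewrite eqn_pmul2l // => /eqP.
  move=> d; rewrite mem_filter -dvdn_divisors //.
  apply/andP/mapP => [[/dvdnP [e ->] hd] | [e he ->]].
    exists e; last by rewrite mulnC.
    by rewrite -dvdn_divisors // -(@dvdn_pmul2l p) // mulnC.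
  by rewrite dvdn_mulr // dvdn_pmul2l // dvdn_divisors.
rewrite (bigID (fun d => p %| d)%N) /= big1 ?add0r; last first.
  move=> e /dvdnP [k ->]; apply: (@mob_sq p) => //.
  by rewrite // mulnCA expnS expn1 dvdn_mull.
rewrite big_seq_cond (eq_bigr (fun e => - mobius e)); last first.
  move=> e /andP [he npe]; apply: mob_mulp => //.
  by move: he; rewrite -dvdn_divisors // => /dvdn_gt0; apply.
rewrite sumrN -big_seq_cond.
rewrite addrC -[X in X + _ = _]big_filter -[X in _ - X = _]big_filter.
rewrite (@big_uniq_eq (filter _ (divisors (p * m))) (filter (fun e => ~~ (p %| e)%N) (divisors m))).
- by rewrite subrr.
- by apply: filter_uniq; apply: divisors_uniq.
- by apply: filter_uniq; apply: divisors_uniq.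
move=> d; rewrite !mem_filter -!dvdn_divisors //.
case pd: (p %| d)%N => //=.
by rewrite Gauss_dvdr // coprime_sym prime_coprime // pd.
Qed.

Lemma sum_mob m : (0 < m)%N -> \sum_(d <- divisors m) mobius d = (m == 1%N)%:R.
Proof.
move=> m0; case: (ltngtP m 1) => [|m1|->]; first by rewrite ltnNge m0.
  have pp := pdiv_prime m1.
  rewrite -(divnK (pdiv_dvd m)) mulnC sum_mob_p //.
  by rewrite divn_gt0 ?prime_gt0 // dvdn_leq // pdiv_dvd.
by rewrite /divisors /= big_cons big_nil.
Qed.

Lemma fib_gt0 k : (0 < k)%N -> (0 < fib k)%N.
Proof.
case: k => // k _.
suff : (0 < fib k.+1)%N /\ (0 < fib k.+2)%N by case.
elim: k => [|k [h1 h2]] //; split => //.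
by rewrite [fib k.+3]/= addn_gt0 h2.
Qed.

Lemma sum_int n I K : (0 < I)%N -> (0 < K)%N -> (K <= n)%N ->
  \sum_(j < n) (if (I %| j.+1)%N && (j.+1 %| K)%N then mobius (j.+1 %/ I) else 0)
  = (I == K)%:R.
Proof.
move=> I0 K0 Kn.
have [/dvdnP [M KM] | nIK] := boolP (I %| K)%N; last first.
  rewrite big1; last first.
    move=> j _; case: ifP => // /andP [h1 h2].
    by rewrite (dvdn_trans h1 h2) in nIK.
  by case: eqP => // e; rewrite e dvdnn in nIK.
rewrite mulnC in KM; subst K.
have M0 : (0 < M)%N by move: K0; rewrite muln_gt0 => /andP [].
rewrite -(big_mkord xpredT (fun j => if (I %| j.+1)%N && (j.+1 %| I * M)%N then mobius (j.+1 %/ I) else 0)).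
rewrite (_ : \sum_(0 <= j < n) _ = \sum_(J <- iota 1 n) (if (I %| J)%N && (J %| I * M)%N then mobius (J %/ I) else 0)); last first.
  by rewrite (iotaDl 1 0) big_map /index_iota subn0.
rewrite -big_mkcond /= -big_filter.
rewrite (@big_uniq_eq _ (map (muln I) (divisors M))).
- rewrite big_map (eq_bigr mobius); last by move=> e _; rewrite mulKn.
  rewrite sum_mob //.
  by rewrite -{1}(muln1 I) eqn_pmul2l // eq_sym.
- by apply: filter_uniq; apply: iota_uniq.
- rewrite map_inj_uniq ?divisors_uniq //.
  by move=> x y /eqP; rewrite eqn_pmul2l // => /eqP.
move=> J; rewrite mem_filter mem_iota.
apply/andP/mapP => [[/andP [/dvdnP [e ->] hd] _] | [e he ->]].
  exists e; last by rewrite mulnC.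
  by rewrite -dvdn_divisors // -(@dvdn_pmul2l I) // mulnC.
rewrite dvdn_mulr // dvdn_pmul2l // dvdn_divisors //; split => //.
move: he; rewrite -dvdn_divisors // => he.
rewrite muln_gt0 I0 (dvdn_gt0 M0 he) /= ltnS (leq_trans _ Kn) //.
by rewrite leq_pmul2l // dvdn_leq.
Qed.

Theorem lemma1 (n : nat) (hn : (0 < n)%N) :
  Dmat n \in unitmx /\ invmx (Dmat n) = Dinv n.
Proof.
have H : Dinv n *m Dmat n = 1%:M.
  apply/matrixP => i k; rewrite !mxE.
  rewrite (eq_bigr (fun j : 'I_n => ((if (i.+1 %| j.+1)%N && (j.+1 %| k.+1)%N
       then mobius (j.+1 %/ i.+1) else 0)%:~R : rat))); last first.
    move=> j _; rewrite !mxE.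
    case: ifP => h1; case: ifP => h2; rewrite ?mulr0 ?mul0r //.
    rewrite mulrC mulrA mulfV ?mul1r //.
    by rewrite pnatr_eq0 -lt0n (@fib_gt0 j.+1 (ltn0Sn j)).
  rewrite -rmorph_sum sum_int // ?ltn_ord //.
  by rewrite eqSS; case: (i =P k) => [->|ne]; rewrite ?eqxx //; case: eqP => // /val_inj.
have H' := mulmx1C H.
have [uD _] := mulmx1_unit H'.
split => //.
by rewrite -[Dinv n](mulKmx uD) H' mulmx1.
Qed.
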